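(* Let $\varphi$ be a hexagonal grid whose reference triangle $T=(A,B,C)$ is nondegenerate, counterclockwise and not equilateral. Let $a=|BC|$, $b=|CA|$, $c=|AB|$, and let $S$ be twice the area of $T$. Let $f_a,f_b,f_c$ be the common foci of the parabolas through the vertex sequences of the $A$-, $B$-, $C$-chains, respectively. Then: 1. $f_a,f_b,f_c$ are the vertices of an equilateral triangle whose centroid is the second isodynamic point $X_{16}(T)$. 2. In homogeneous barycentric coordinates with respect to $ABC$, $f_a=(x:y:z)$ with $$x=\sqrt3\,(7a^2b^2+7a^2c^2+2b^2c^2-4a^4-b^4-c^4)-2S(8a^2+b^2+c^2),$$ $$y=\sqrt3\,(2a^2b^2-a^2c^2+3b^2c^2-4b^4+c^4)+2S(2a^2-2b^2-c^2),$$ $$z=-\sqrt3\,(a^2b^2-2a^2c^2-3b^2c^2-b^4+4c^4)+2S(2a^2-b^2-2c^2).$$ 3. The side length $s$ of the triangle $f_af_bf_c$ satisfies $$s^2=\tfrac{3}{32}\left(a^2+b^2+c^2-2\sqrt3\,S\right)=\tfrac{3}{16}(\cot\omega-\sqrt3)\,S,$$ where $\omega$ is the Brocard angle of $T$.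
   Context: Let $\zeta=e^{i\pi/3}$ and $\Lambda=\{m+n\zeta: m,n\in\mathbb{Z}\}$. Call $p,q\in\Lambda$ adjacent if $|p-q|=1$, and let $\mathcal{E}$ be the set of unordered pairs $\{p,q\}$ of adjacent lattice points. A hexagonal grid is a map $\varphi:\mathcal{E}\to\mathbb{C}$ such that for every $p\in\Lambda$ there exist $c_p,r_p\in\mathbb{C}$ with $\varphi(\{p,p+\zeta^k\})=c_p+r_p\zeta^k$ for $k=0,\dots,5$. Thus the six points form a regular, possibly degenerate, hexagon $H_p$ listed counterclockwise. For each set $\{p,q,s\}\subset\Lambda$ of three pairwise adjacent lattice points listed counterclockwise, the corresponding triangle of the grid is $(\varphi(\{p,q\}),\varphi(\{q,s\}),\varphi(\{s,p\}))$. The reference triangle of $\varphi$ is $(\varphi(\{0,1\}),\varphi(\{1,\zeta\}),\varphi(\{\zeta,0\}))$. Chains. For $p\in\Lambda$ and a direction $e\in\{1,\zeta,\zeta^2\}$, the chain of hexagons $(H_{p+ke})_{k\in\mathbb{Z}}$ has consecutive hexagons sharing the vertex $U_k=\varphi(\{p+ke,p+(k+1)e\})$. The points $U_{k-1}$ and $U_k$ are antipodal vertices of $H_{p+ke}$; $(U_k)_{k\in\mathbb{Z}}$ is the vertex sequence of the chain. Chains of direction $1$, $\zeta^2$, $\zeta$ are called $A$-, $B$-, $C$-chains, respectively. Note that $A=\varphi(\{0,1\})$, $B=\varphi(\{1,1+\zeta^2\})$ and $C=\varphi(\{0,\zeta\})$. Standing fact (proved in the paper): the vertex sequence of each chain lies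 on a parabola, and parabolas from chains with the same direction share a focus. The Brocard angle $\omega$ of $T$ is defined by $\cot\omega=(a^2+b^2+c^2)/(2S)$. For a nondegenerate triangle with vertices $V_1,V_2,V_3$, let $\ell_i$ be the length of the side opposite $V_i$ and $\theta_i$ the angle at $V_i$. Its second isodynamic point $X_{16}$ has homogeneous barycentric coordinates $(\ell_1\sin(\theta_1-\pi/3):\ell_2\sin(\theta_2-\pi/3):\ell_3\sin(\theta_3-\pi/3))$. *)

(* Defs.v *)
From mathcomp Require Import all_boot all_order all_algebra.
From mathcomp Require Import all_classical all_reals all_analysis.
From mathcomp Require Export complex.
Set Implicit Arguments. Unset Strict Implicit. Unset Printing Implicit Defensive.
Import Order.TTheory GRing.Theory Num.Theory.
Local Open Scope ring_scope.
Local Open Scope complex_scope.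

Section Defs.
Variable R : realType.

Definition cre (z : R[i]) : R := complex.Re z.
Definition cim (z : R[i]) : R := complex.Im z.
Definition cnorm (z : R[i]) : R := Num.sqrt (cre z ^+ 2 + cim z ^+ 2).
Definition rC (x : R) : R[i] := Complex x 0.

Definition zeta : R[i] := Complex (1 / 2) (Num.sqrt 3 / 2).

(* lattice points m + n zeta are coded by the pair (m, n) *)
Definition lat := (int * int)%type.
Definition latC (p : lat) : R[i] := rC (p.1)%:~R + rC (p.2)%:~R * zeta.
Definition ladd (p q : lat) : lat := (p.1 + q.1, p.2 + q.2).
Definition lscale (k : int) (p : lat) : lat := (k * p.1, k * p.2).

(* zeta^k as lattice point, k = 0..5:
   1 = (1,0), zeta = (0,1), zeta^2 = zeta - 1 = (-1,1), zeta^3 = -1 = (-1,0),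
   zeta^4 = -zeta = (0,-1), zeta^5 = 1 - zeta = (1,-1) *)
Definition dir (k : 'I_6) : lat :=
  match val k with
  | 0 => (1, 0) | 1 => (0, 1) | 2 => (-1, 1)
  | 3 => (-1, 0) | 4 => (0, -1) | _ => (1, -1)
  end.

Definition adjacent (p q : lat) : Prop := cnorm (latC p - latC q) = 1.

(* A map on unordered edges {p,q} is coded as a function on ordered pairs,
   required to be symmetric on adjacent pairs; values on non-adjacent pairs
   are irrelevant. *)
Definition hex_grid (phi : lat -> lat -> R[i]) : Prop :=
  (forall p q, adjacent p q -> phi p q = phi q p) /\
  (forall p, exists c r : R[i], forall k : 'I_6,
      phi p (ladd p (dir k)) = c + r * zeta ^+ k).

Definition chain_vertex (phi : lat -> lat -> R[i]) (p e : lat) (k : int) : R[i] :=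
  phi (ladd p (lscale k e)) (ladd p (lscale (k + 1) e)).

Definition dirA : lat := (1, 0).
Definition dirB : lat := (-1, 1).
Definition dirC : lat := (0, 1).

(* distance from z to the line through d with direction u (u != 0) *)
Definition dist_line (z d u : R[i]) : R := `| cim ((z - d) * u^*) | / cnorm u.

(* the sequence U lies on a parabola with focus f (and some directrix
   not passing through f) *)
Definition on_parabola_with_focus (f : R[i]) (U : int -> R[i]) : Prop :=
  exists d u : R[i], u != 0 /\ dist_line f d u != 0 /\
    forall k, cnorm (U k - f) = dist_line (U k) d u.

Definition refA (phi : lat -> lat -> R[i]) : R[i] := phi (0, 0) (1, 0).
Definition refB (phi : lat -> lat -> R[i]) : R[i] := phi (1, 0) (0, 1).
Definition refC (phi : lat -> lat -> R[i]) : R[i] := phi (0, 1) (0, 0).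

(* twice the signed area; > 0 iff nondegenerate and counterclockwise *)
Definition sarea2 (A B C : R[i]) : R := cim ((B - A)^* * (C - A)).

Definition dotc (z w : R[i]) : R := cre (z * w^*).
Definition angle_at (V P Q : R[i]) : R :=
  acos (dotc (P - V) (Q - V) / (cnorm (P - V) * cnorm (Q - V))).

Definition is_bary (P : R[i]) (x y z : R) (A B C : R[i]) : Prop :=
  x + y + z != 0 /\ P * rC (x + y + z) = rC x * A + rC y * B + rC z * C.

Definition isX16 (P A B C : R[i]) : Prop :=
  is_bary P (cnorm (B - C) * sin (angle_at A B C - pi / 3))
            (cnorm (C - A) * sin (angle_at B C A - pi / 3))
            (cnorm (A - B) * sin (angle_at C A B - pi / 3)) A B C.

(* Brocard angle: the omega in (0, pi/2) with cot omega = (a^2+b^2+c^2)/(2S) *)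
Definition cot (x : R) : R := cos x / sin x.
Definition brocard (A B C : R[i]) : R :=
  atan (2 * sarea2 A B C /
        (cnorm (B - C) ^+ 2 + cnorm (C - A) ^+ 2 + cnorm (A - B) ^+ 2)).

End Defs.

(* Main.v *)
Require Import Defs.
From mathcomp Require Import all_boot all_order all_algebra.
From mathcomp Require Import all_classical all_reals all_analysis.
From mathcomp Require Import complex.
From mathcomp Require Import ring lra.
Import Order.TTheory GRing.Theory Num.Theory.
Local Open Scope ring_scope.
Local Open Scope complex_scope.
Ltac side := repeat (apply/andP; split); rewrite ?pnatr_eq0 //=; try assumption.
Section S.
Variable R : realType.
Notation C := (R[i]).
Notation sq3 := (Num.sqrt (3 : R)).
Notation z := (zeta R).
Lemma r3sq : sq3 ^+ 2 = 3. Proof. by rewrite sqr_sqrtr. Qed.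
Lemma r3gt0 : 0 < sq3. Proof. by rewrite sqrtr_gt0. Qed.
Lemma cplx_eq (x y : C) : complex.Re x = complex.Re y -> complex.Im x = complex.Im y -> x = y.
Proof. by case: x => ? ?; case: y => ? ? /= -> ->. Qed.

Lemma zeta2 : z ^+ 2 = z - 1.
Proof. by apply: cplx_eq; rewrite /zeta /=; field: r3sq. Qed.
Lemma zeta3 : z ^+ 3 = -1.
Proof. by rewrite exprS zeta2; apply: cplx_eq; rewrite /zeta /=; field: r3sq. Qed.
Lemma zeta4 : z ^+ 4 = - z.
Proof. by rewrite exprS zeta3 mulrN1. Qed.
Lemma zeta5 : z ^+ 5 = 1 - z.
Proof. by rewrite exprS zeta4 mulrN -expr2 zeta2 opprB. Qed.

Lemma latCE p : latC R p = (p.1)%:~R + (p.2)%:~R * z.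
Proof. by rewrite /latC /rC !complexr0 !rmorph_int. Qed.
Lemma latC_add p q : latC R (ladd p q) = latC R p + latC R q.
Proof. rewrite !latCE /ladd /= !intrD; ring. Qed.
Lemma latC_scale k p : latC R (lscale k p) = k%:~R * latC R p.
Proof. rewrite !latCE /lscale /= !intrM; ring. Qed.

Lemma latC_dir k : latC R (dir k) = z ^+ k.
Proof.
case: k => [[|[|[|[|[|[|//]]]]]] ?]; rewrite latCE /dir /=.
- by rewrite expr0; ring.
- by rewrite expr1; ring.
- by rewrite zeta2; ring.
- by rewrite zeta3; ring.
- by rewrite zeta4; ring.
- by rewrite zeta5; ring.
Qed.

Lemma latC_inj p q : latC R p = latC R q -> p = q.
Proof.
case: p => [p1 p2]; case: q => [q1 q2] E.
have EI := congr1 (@complex.Im R) E; have ER := congr1 (@complex.Re R) E.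
move: EI ER; rewrite /latC /rC /zeta /= => EI ER.
have E2 : (p2%:~R : R) = q2%:~R.
  have : (p2%:~R - q2%:~R) * sq3 = 0 :> R by lra.
  by move/eqP; rewrite mulf_eq0 subr_eq0 (gt_eqF r3gt0) orbF => /eqP.
have E1 : (p1%:~R : R) = q1%:~R by lra.
by move/intr_inj: E1 => ->; move/intr_inj: E2 => ->.
Qed.

Lemma dir_inj k1 k2 : dir k1 = dir k2 -> k1 = k2.
Proof.
move: k1 k2 => [[|[|[|[|[|[|//]]]]]] ?] [[|[|[|[|[|[|//]]]]]] ?] /eqP //= _;
  by apply: val_inj.
Qed.

Lemma zeta_inj (k1 k2 : 'I_6) : k1 != k2 -> z ^+ k1 != z ^+ k2.
Proof.
move=> ne; apply/eqP; rewrite -!latC_dir => /latC_inj /dir_inj E.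
by rewrite E eqxx in ne.
Qed.

Lemma cnorm_zk (k : 'I_6) : cnorm (- z ^+ k) = 1.
Proof.
rewrite /cnorm -[1]sqrtr1; congr Num.sqrt.
case: k => [[|[|[|[|[|[|//]]]]]] ?] /=;
  rewrite ?expr0 ?expr1 ?zeta2 ?zeta3 ?zeta4 ?zeta5 /cre /cim /zeta /=; by field: r3sq.
Qed.

Lemma adj_dir p k : Defs.adjacent R p (ladd p (dir k)).
Proof.
by rewrite /Defs.adjacent latC_add latC_dir opprD addrA subrr add0r cnorm_zk.
Qed.

Lemma opp_dir k : exists k', forall s, ladd (ladd s (dir k)) (dir k') = s.
Proof.
case: k => [[|[|[|[|[|[|//]]]]]] ?].
- exists (@Ordinal 6 3 isT) => -[s1 s2]; rewrite /ladd /dir /=; congr pair; ring.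
- exists (@Ordinal 6 4 isT) => -[s1 s2]; rewrite /ladd /dir /=; congr pair; ring.
- exists (@Ordinal 6 5 isT) => -[s1 s2]; rewrite /ladd /dir /=; congr pair; ring.
- exists (@Ordinal 6 0 isT) => -[s1 s2]; rewrite /ladd /dir /=; congr pair; ring.
- exists (@Ordinal 6 1 isT) => -[s1 s2]; rewrite /ladd /dir /=; congr pair; ring.
- exists (@Ordinal 6 2 isT) => -[s1 s2]; rewrite /ladd /dir /=; congr pair; ring.
Qed.

Definition model (g al be x y : C) := g + al * (x + y) + be * x * y.
Definition good (phi : lat -> lat -> C) g al be p :=
  forall k, phi p (ladd p (dir k)) = model g al be (latC R p) (latC R (ladd p (dir k))).

Lemma propag phi g al be s k1 k2 : hex_grid phi -> k1 != k2 ->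
  good phi g al be (ladd s (dir k1)) -> good phi g al be (ladd s (dir k2)) ->
  good phi g al be s.
Proof.
case=> Hsym Hhex ne G1 G2.
have [c [r Hcr]] := Hhex s.
have keyL k : good phi g al be (ladd s (dir k)) ->
    c + r * z ^+ k = model g al be (latC R s) (latC R s + z ^+ k).
  move=> Gk; rewrite -Hcr; have [k' Hk'] := opp_dir k.
  rewrite Hsym; last exact: adj_dir.
  have -> : phi (ladd s (dir k)) s = phi (ladd s (dir k)) (ladd (ladd s (dir k)) (dir k')).
    by rewrite Hk'.
  rewrite Gk Hk' latC_add latC_dir /model; ring.
have K1 := keyL _ G1; have K2 := keyL _ G2.
set zs := latC R s in K1 K2.
have Er : r = al + be * zs.
  have : (r - (al + be * zs)) * (z ^+ k1 - z ^+ k2) = 0.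
    have -> : (r - (al + be * zs)) * (z ^+ k1 - z ^+ k2) =
       (c + r * z ^+ k1 - model g al be zs (zs + z ^+ k1)) -
       (c + r * z ^+ k2 - model g al be zs (zs + z ^+ k2)) by rewrite /model; ring.
    by rewrite K1 K2 !subrr.
  move/eqP; rewrite mulf_eq0 !subr_eq0 (negPf (zeta_inj _ _ ne)) orbF.
  by move/eqP.
have Ec : c = g + 2 * al * zs + be * zs ^+ 2.
  move: K1; rewrite Er /model => K1.
  have : c = c + (al + be * zs) * z ^+ k1 - (al + be * zs) * z ^+ k1 by ring.
  by rewrite K1 => ->; ring.
move=> k; rewrite Hcr latC_add latC_dir -/zs Er Ec /model; ring.
Qed.

Lemma latC00 : latC R (0,0) = 0.
Proof. by rewrite latCE /=; ring. Qed.

Lemma good_init phi : hex_grid phi -> exists g al be,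
  good phi g al be (0,0) /\ good phi g al be (1,0).
Proof.
case=> Hsym Hhex.
have [c0 [r0 H0]] := Hhex (0,0); have [c1 [r1 H1]] := Hhex (1,0).
have E : c1 = c0 + r0 + r1.
  have ea : phi (0,0) (1,0) = c0 + r0 * z ^+ (@Ordinal 6 0 isT) := H0 (@Ordinal 6 0 isT).
  have eb : phi (1,0) (0,0) = c1 + r1 * z ^+ (@Ordinal 6 3 isT) := H1 (@Ordinal 6 3 isT).
  have := Hsym (0,0) (1,0) (adj_dir (0,0) (@Ordinal 6 0 isT)).
  rewrite ea eb /= zeta3 expr0 => e; have -> : c1 = c1 + r1 * -1 + r1 by ring.
  by rewrite -e; ring.
exists c0, r0, (r1 - r0); split => k.
- by rewrite H0 latC_add latC_dir latC00 /model; ring.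
- rewrite H1 latC_add latC_dir E (_ : latC R (1,0) = 1) /model; first ring.
  by rewrite latCE /=; ring.
Qed.

Lemma needed phi g al be : hex_grid phi ->
  good phi g al be (0,0) -> good phi g al be (1,0) ->
  good phi g al be (ladd (0,0) (lscale 0 dirA)) /\ good phi g al be (ladd (0,0) (lscale 1 dirA)) /\ good phi g al be (ladd (0,0) (lscale 2 dirA)) /\ good phi g al be (ladd (0,0) (lscale 3 dirA)) /\ good phi g al be (ladd (0,0) (lscale 4 dirA)) /\ good phi g al be (ladd (0,0) (lscale 0 dirB)) /\ good phi g al be (ladd (0,0) (lscale 1 dirB)) /\ good phi g al be (ladd (0,0) (lscale 2 dirB)) /\ good phi g al be (ladd (0,0) (lscale 3 dirB)) /\ good phi g al be (ladd (0,0) (lscale 4 dirB)) /\ good phi g al be (ladd (0,0) (lscale 0 dirC)) /\ good phi g al be (ladd (0,0) (lscale 1 dirC)) /\ good phi g al be (ladd (0,0) (lscale 2 dirC)) /\ good phi g al be (ladd (0,0) (lscale 3 dirC)) /\ good phi g al be (ladd (0,0) (lscale 4 dirC)).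
Proof.
move=> Hg G_0_0 G_1_0.
have G_0_1 : good phi g al be (0, 1) := @propag phi g al be (0, 1) (@Ordinal 6 4 isT) (@Ordinal 6 5 isT) Hg isT G_0_0 G_1_0.
have G_m1_1 : good phi g al be ((-1), 1) := @propag phi g al be ((-1), 1) (@Ordinal 6 0 isT) (@Ordinal 6 5 isT) Hg isT G_0_1 G_0_0.
have G_1_1 : good phi g al be (1, 1) := @propag phi g al be (1, 1) (@Ordinal 6 3 isT) (@Ordinal 6 4 isT) Hg isT G_0_1 G_1_0.
have G_0_2 : good phi g al be (0, 2) := @propag phi g al be (0, 2) (@Ordinal 6 4 isT) (@Ordinal 6 5 isT) Hg isT G_0_1 G_1_1.
have G_2_0 : good phi g al be (2, 0) := @propag phi g al be (2, 0) (@Ordinal 6 2 isT) (@Ordinal 6 3 isT) Hg isT G_1_1 G_1_0.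
have G_2_1 : good phi g al be (2, 1) := @propag phi g al be (2, 1) (@Ordinal 6 3 isT) (@Ordinal 6 4 isT) Hg isT G_1_1 G_2_0.
have G_1_2 : good phi g al be (1, 2) := @propag phi g al be (1, 2) (@Ordinal 6 3 isT) (@Ordinal 6 4 isT) Hg isT G_0_2 G_1_1.
have G_m1_2 : good phi g al be ((-1), 2) := @propag phi g al be ((-1), 2) (@Ordinal 6 0 isT) (@Ordinal 6 4 isT) Hg isT G_0_2 G_m1_1.
have G_0_3 : good phi g al be (0, 3) := @propag phi g al be (0, 3) (@Ordinal 6 4 isT) (@Ordinal 6 5 isT) Hg isT G_0_2 G_1_2.
have G_3_0 : good phi g al be (3, 0) := @propag phi g al be (3, 0) (@Ordinal 6 2 isT) (@Ordinal 6 3 isT) Hg isT G_2_1 G_2_0.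
have G_3_1 : good phi g al be (3, 1) := @propag phi g al be (3, 1) (@Ordinal 6 3 isT) (@Ordinal 6 4 isT) Hg isT G_2_1 G_3_0.
have G_4_0 : good phi g al be (4, 0) := @propag phi g al be (4, 0) (@Ordinal 6 2 isT) (@Ordinal 6 3 isT) Hg isT G_3_1 G_3_0.
have G_1_3 : good phi g al be (1, 3) := @propag phi g al be (1, 3) (@Ordinal 6 3 isT) (@Ordinal 6 4 isT) Hg isT G_0_3 G_1_2.
have G_0_4 : good phi g al be (0, 4) := @propag phi g al be (0, 4) (@Ordinal 6 4 isT) (@Ordinal 6 5 isT) Hg isT G_0_3 G_1_3.
have G_m2_2 : good phi g al be ((-2), 2) := @propag phi g al be ((-2), 2) (@Ordinal 6 0 isT) (@Ordinal 6 5 isT) Hg isT G_m1_2 G_m1_1.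
have G_m2_3 : good phi g al be ((-2), 3) := @propag phi g al be ((-2), 3) (@Ordinal 6 4 isT) (@Ordinal 6 5 isT) Hg isT G_m2_2 G_m1_2.
have G_4_1 : good phi g al be (4, 1) := @propag phi g al be (4, 1) (@Ordinal 6 3 isT) (@Ordinal 6 4 isT) Hg isT G_3_1 G_4_0.
have G_1_4 : good phi g al be (1, 4) := @propag phi g al be (1, 4) (@Ordinal 6 3 isT) (@Ordinal 6 4 isT) Hg isT G_0_4 G_1_3.
have G_m3_3 : good phi g al be ((-3), 3) := @propag phi g al be ((-3), 3) (@Ordinal 6 0 isT) (@Ordinal 6 5 isT) Hg isT G_m2_3 G_m2_2.
have G_m3_4 : good phi g al be ((-3), 4) := @propag phi g al be ((-3), 4) (@Ordinal 6 4 isT) (@Ordinal 6 5 isT) Hg isT G_m3_3 G_m2_3.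
have G_m4_4 : good phi g al be ((-4), 4) := @propag phi g al be ((-4), 4) (@Ordinal 6 0 isT) (@Ordinal 6 5 isT) Hg isT G_m3_4 G_m3_3.
by do !split.
Qed.
Lemma sqeq (Q L U : R) : 0 <= Q -> 0 < U -> Num.sqrt Q = `|L| / Num.sqrt U ->
  U * Q = L ^+ 2.
Proof.
move=> hQ hU E.
have : Num.sqrt Q ^+ 2 = (`|L| / Num.sqrt U) ^+ 2 by rewrite E.
rewrite sqr_sqrtr // expr_div_n sqr_sqrtr ?ltW // real_normK ?num_real // => ->.
by field; rewrite gt_eqF.
Qed.

Lemma sum2_gt0 (x y : R) : (x != 0) || (y != 0) -> 0 < x ^+ 2 + y ^+ 2.
Proof.
move=> h; rewrite lt_neqAle addr_ge0 ?sqr_ge0 // andbT eq_sym paddr_eq0 ?sqr_ge0 //.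
by rewrite !sqrf_eq0 negb_and.
Qed.

Lemma focus_real (a1 a2 b1 b2 v1 v2 k : R) :
  let N := a1 ^+ 2 + a2 ^+ 2 in let D := a1 * b2 - a2 * b1 in
  N != 0 -> D != 0 ->
  D ^+ 2 + 2 * N * (a1 * v1 + a2 * v2) - 2 * N * k = 0 ->
  N * (b1 * v1 + b2 * v2) - (a1 * b1 + a2 * b2) * k = 0 ->
  N * (v1 ^+ 2 + v2 ^+ 2) = k ^+ 2 ->
  4 * (a1 * v1 - a2 * v2) = b1 ^+ 2 - b2 ^+ 2 /\ 4 * (a1 * v2 + a2 * v1) = 2 * b1 * b2.
Proof.
move=> N D hN hD E1 E2 E3.
have hav : a1 * v1 + a2 * v2 = k - D ^+ 2 / (2 * N).
  apply: (mulfI hN); rewrite mulrBr; apply/eqP; rewrite -subr_eq0; apply/eqP.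
  rewrite -[RHS](mulr0 (2^-1)) -E1; field; side.
have hbv : b1 * v1 + b2 * v2 = (a1 * b1 + a2 * b2) * k / N.
  apply: (mulfI hN); apply/eqP; rewrite -subr_eq0; apply/eqP.
  rewrite -E2; field; side.
have hv1 : v1 = (b2 * (k - D ^+ 2 / (2 * N)) - a2 * ((a1 * b1 + a2 * b2) * k / N)) / D.
  rewrite -hav -hbv; apply: (mulfI hD); rewrite /D; field; side.
have hv2 : v2 = (a1 * ((a1 * b1 + a2 * b2) * k / N) - b1 * (k - D ^+ 2 / (2 * N))) / D.
  rewrite -hav -hbv; apply: (mulfI hD); rewrite /D; field; side.
have hk : k = (b1 ^+ 2 + b2 ^+ 2) / 4.
  have : N * (v1 ^+ 2 + v2 ^+ 2) - k ^+ 2 = D ^+ 2 * ((b1 ^+ 2 + b2 ^+ 2) / 4 - k) / N.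
    rewrite hv1 hv2 /D /N; field; side.
  rewrite E3 subrr => /esym /eqP; rewrite !mulf_eq0 invr_eq0 (negPf hN) orbF.
  rewrite (negPf hD) /= subr_eq0 => /eqP <-.
  by [].
by rewrite hv1 hv2 hk; split; rewrite /D /N; field; side.
Qed.


Lemma focus_lemma (a b c f d u : C) : a != 0 -> u != 0 -> dist_line f d u != 0 ->
  (forall n : nat, (n <= 4)%N -> cnorm (c + b * rC (n%:R) + a * rC (n%:R) ^+ 2 - f)
       = dist_line (c + b * rC (n%:R) + a * rC (n%:R) ^+ 2) d u) ->
  rC 4 * a * (c - f) = b ^+ 2.
Proof.
move: a b c f d u => [a1 a2] [b1 b2] [c1 c2] [f1 f2] [d1 d2] [u1 u2] ha hu hdl H.
have hU : 0 < u1 ^+ 2 + u2 ^+ 2.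
  apply: sum2_gt0; move: hu; apply: contraR; rewrite negb_or !negbK.
  by case/andP => /eqP -> /eqP ->.
have hN : a1 ^+ 2 + a2 ^+ 2 != 0.
  rewrite gt_eqF // sum2_gt0 //; move: ha; apply: contraR; rewrite negb_or !negbK.
  by case/andP => /eqP -> /eqP ->.
pose Gf (t : R) := (u1 ^+ 2 + u2 ^+ 2) *
   ((c1 + b1 * t + a1 * t ^+ 2 - f1) ^+ 2 + (c2 + b2 * t + a2 * t ^+ 2 - f2) ^+ 2)
   - ((c2 + b2 * t + a2 * t ^+ 2 - d2) * u1 - (c1 + b1 * t + a1 * t ^+ 2 - d1) * u2) ^+ 2.
have HG n : (n <= 4)%N -> Gf n%:R = 0.
  move=> /H; rewrite /dist_line /cnorm /cre /cim /rC /= => E.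
  have := sqeq _ _ _ (addr_ge0 (sqr_ge0 _) (sqr_ge0 _)) hU E; rewrite /Gf => E'.
  lra.
have hdot : a1 * u1 + a2 * u2 = 0.
  have : 24 * (a1 * u1 + a2 * u2) ^+ 2 = Gf 0 - 4 * Gf 1 + 6 * Gf 2 - 4 * Gf 3 + Gf 4.
    rewrite /Gf; ring.
  have G0 : Gf 0 = 0 := HG 0%N isT. have G1 : Gf 1 = 0 := HG 1%N isT.
  have G2 : Gf 2 = 0 := HG 2%N isT. have G3 : Gf 3 = 0 := HG 3%N isT.
  have G4 : Gf 4 = 0 := HG 4%N isT.
  rewrite G0 G1 G2 G3 G4.
  move/eqP; rewrite !(mulr0, subr0, addr0) mulf_eq0 pnatr_eq0 /= sqrf_eq0.
  by move/eqP.
have [mu [hu1 hu2]] : exists mu, u1 = - mu * a2 /\ u2 = mu * a1.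
  exists ((a1 * u2 - a2 * u1) / (a1 ^+ 2 + a2 ^+ 2)); split.
  - apply: (mulIf hN).
    have e : u1 * (a1 ^+ 2 + a2 ^+ 2) = - (a1 * u2 - a2 * u1) * a2.
      have : a1 * (a1 * u1 + a2 * u2) = 0 by rewrite hdot mulr0.
      lra.
    by rewrite e; field; side.
  - apply: (mulIf hN).
    have e : u2 * (a1 ^+ 2 + a2 ^+ 2) = (a1 * u2 - a2 * u1) * a1.
      have : a2 * (a1 * u1 + a2 * u2) = 0 by rewrite hdot mulr0.
      lra.
    by rewrite e; field; side.
subst u1 u2.
have hmu : mu != 0.
  apply/eqP => m0; move/negP: hu; apply; apply/eqP; rewrite m0 oppr0 !mul0r; reflexivity.
pose N := a1 ^+ 2 + a2 ^+ 2.
pose Hf (t : R) := N *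
   ((c1 + b1 * t + a1 * t ^+ 2 - f1) ^+ 2 + (c2 + b2 * t + a2 * t ^+ 2 - f2) ^+ 2)
   - (a1 * (c1 + b1 * t + a1 * t ^+ 2 - d1) + a2 * (c2 + b2 * t + a2 * t ^+ 2 - d2)) ^+ 2.
have HH n : (n <= 4)%N -> Hf n%:R = 0.
  move=> /HG; have -> : Gf n%:R = mu ^+ 2 * Hf n%:R by rewrite /Gf /Hf /N; ring.
  by move/eqP; rewrite mulf_eq0 sqrf_eq0 (negPf hmu) /= => /eqP.
have H0 : Hf 0 = 0 := HH 0%N isT. have H1 : Hf 1 = 0 := HH 1%N isT.
have H2 : Hf 2 = 0 := HH 2%N isT.
pose k := a1 * (c1 - d1) + a2 * (c2 - d2).
pose D := a1 * b2 - a2 * b1.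
have E3 : N * ((c1 - f1) ^+ 2 + (c2 - f2) ^+ 2) = k ^+ 2.
  apply/eqP; rewrite -subr_eq0; apply/eqP; rewrite -H0 /Hf /k; ring.
have E1 : D ^+ 2 + 2 * N * (a1 * (c1 - f1) + a2 * (c2 - f2)) - 2 * N * k = 0.
  have -> : D ^+ 2 + 2 * N * (a1 * (c1 - f1) + a2 * (c2 - f2)) - 2 * N * k
     = (Hf 0 - 2 * Hf 1 + Hf 2) / 2 by rewrite /Hf /D /N /k; field.
  by rewrite H0 H1 H2; field.
have E2 : N * (b1 * (c1 - f1) + b2 * (c2 - f2)) - (a1 * b1 + a2 * b2) * k = 0.
  have -> : N * (b1 * (c1 - f1) + b2 * (c2 - f2)) - (a1 * b1 + a2 * b2) * k
     = (Hf 1 - Hf 0 - (Hf 0 - 2 * Hf 1 + Hf 2) / 2) / 2 by rewrite /Hf /D /N /k; field.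
  by rewrite H0 H1 H2; field.
have hD : D != 0.
  apply/negP => /eqP hD0; move: hdl; rewrite /dist_line /cim /=.
  have -> : (f1 - d1) * - (mu * a1) + (f2 - d2) * (- mu * a2) =
     - mu * (k - (a1 * (c1 - f1) + a2 * (c2 - f2))) by rewrite /k; ring.
  have -> : k - (a1 * (c1 - f1) + a2 * (c2 - f2)) = 0.
    apply: (mulfI (_ : 2 * N != 0)); first by rewrite mulf_neq0 ?pnatr_eq0.
    by rewrite mulr0; move: E1; rewrite hD0; lra.
  by rewrite mulr0 normr0 mul0r eqxx.
have [F1 F2] := focus_real _ _ _ _ _ _ _ hN hD E1 E2 E3.
apply: cplx_eq; rewrite /rC /=; lra.
Qed.


Lemma rC_nat n : rC (n%:R) = n%:R :> C.
Proof. by rewrite /rC complexr0 rmorph_nat. Qed.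

Lemma z_neq0 : z != 0.
Proof.
apply/eqP => /(congr1 (@complex.Re R)) /=; apply/eqP.
by rewrite /zeta /= -[0]/(0 : R) mulf_neq0 ?invr_eq0 ?pnatr_eq0.
Qed.

Lemma chain_model phi g al be e (j : 'I_6) k : e = dir j ->
  good phi g al be (ladd (0,0) (lscale k e)) ->
  chain_vertex phi (0,0) e k = model g al be (k%:~R * z ^+ j) ((k + 1)%:~R * z ^+ j).
Proof.
move=> ej G; rewrite /chain_vertex.
have -> : ladd (0,0) (lscale (k + 1) e) = ladd (ladd (0,0) (lscale k e)) (dir j).
  by rewrite ej /ladd /lscale /=; congr pair; ring.
by rewrite G /model !latC_add !latC_scale latC00 latC_dir ej latC_dir intrD; ring.
Qed.

Lemma focus_of phi g al be e (j : 'I_6) f : e = dir j -> be != 0 ->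
  (forall n : nat, (n <= 4)%N -> good phi g al be (ladd (0,0) (lscale n%:Z e))) ->
  on_parabola_with_focus f (chain_vertex phi (0,0) e) ->
  f = g - al ^+ 2 / be - be * (z ^+ j) ^+ 2 / 4.
Proof.
move=> ej hbe Hgood [d [u [hu [hdl Hk]]]].
have hw : z ^+ j != 0 by rewrite expf_neq0 // z_neq0.
have E := @focus_lemma (be * (z ^+ j) ^+ 2) (2%:R * al * z ^+ j + be * (z ^+ j) ^+ 2)
   (g + al * z ^+ j) f d u (mulf_neq0 hbe (expf_neq0 _ hw)) hu hdl.
have {}E : rC 4 * (be * (z ^+ j) ^+ 2) * (g + al * z ^+ j - f) =
   (2%:R * al * z ^+ j + be * (z ^+ j) ^+ 2) ^+ 2.
  apply: E => n hn; have := Hk n%:Z.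
  rewrite (chain_model _ _ _ _ _ _ _ ej (Hgood n hn)) /model !rC_nat.
  suff -> : g + al * ((n%:Z)%:~R * z ^+ j + (n%:Z + 1)%:~R * z ^+ j) +
      be * ((n%:Z)%:~R * z ^+ j) * ((n%:Z + 1)%:~R * z ^+ j) =
      g + al * z ^+ j + (2%:R * al * z ^+ j + be * (z ^+ j) ^+ 2) * n%:R +
      be * (z ^+ j) ^+ 2 * n%:R ^+ 2 by [].
  by rewrite intrD; ring.
move: E; rewrite (rC_nat 4) => E.
have -> : f = (g + al * z ^+ j) -
    (4%:R * (be * (z ^+ j) ^+ 2) * (g + al * z ^+ j - f)) / (4%:R * (be * (z ^+ j) ^+ 2)).
  by field; side.
by rewrite E; field; side.
Qed.

Definition cn2 (x : C) := cre x ^+ 2 + cim x ^+ 2.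
Lemma cn2_ge0 x : 0 <= cn2 x. Proof. by rewrite /cn2 addr_ge0 ?sqr_ge0. Qed.
Lemma cnorm2 (x : C) : cnorm x ^+ 2 = cn2 x.
Proof. by rewrite /cnorm sqr_sqrtr // cn2_ge0. Qed.
Lemma cnorm_ge0 (x : C) : 0 <= cnorm x. Proof. exact: sqrtr_ge0. Qed.
Lemma cnormN (x : C) : cnorm (- x) = cnorm x.
Proof. by case: x => x1 x2; rewrite /cnorm /cre /cim /= !sqrrN. Qed.
Lemma cnormB (x y : C) : cnorm (x - y) = cnorm (y - x).
Proof. by rewrite -cnormN opprB. Qed.

Lemma cos_pi3 : cos (@pi R / 3) = 1 / 2.
Proof.
set t := @pi R / 3; set c := cos t.
have c3 : cos (t + t + t) = 4 * c ^+ 3 - 3 * c.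
  have h := sin2cos2 t; rewrite !cosD !sinD -/c; rewrite -/c in h; ring: h.
have ht : t + t + t = pi by rewrite /t; field.
rewrite ht cospi in c3.
have cpos : 0 < c.
  apply: cos_gt0_pihalf; have := @pi_gt0 R; rewrite /t => hp; apply/andP; split; lra.
have e : (c + 1) * (2 * c - 1) ^+ 2 = (4 * c ^+ 3 - 3 * c) + 1 by ring.
rewrite -c3 addNr in e; move/eqP: e; rewrite mulf_eq0 sqrf_eq0 (gt_eqF (_ : 0 < c + 1)); last lra.
rewrite /= subr_eq0 => /eqP h; apply: (mulfI (_ : (2 : R) != 0)); first by rewrite pnatr_eq0.
by rewrite h; field.
Qed.

Lemma sin_pi3 : sin (@pi R / 3) = sq3 / 2.
Proof.
have hs : 0 < sin (@pi R / 3).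
  apply: sin_gt0_pi; have := @pi_gt0 R => hp; apply/andP; split; lra.
have h := sin2cos2 (@pi R / 3); rewrite cos_pi3 in h.
have : (sin (@pi R / 3) - sq3 / 2) * (sin (@pi R / 3) + sq3 / 2) = 0.
  rewrite (_ : (sin (pi / 3) - sq3 / 2) * (sin (pi / 3) + sq3 / 2) = sin (pi/3) ^+ 2 - sq3 ^+ 2 / 4); last by field.
  by rewrite h r3sq; field.
move/eqP; rewrite mulf_eq0 (gt_eqF (_ : 0 < sin (pi / 3) + sq3 / 2)) ?orbF.
  by rewrite subr_eq0 => /eqP.
have := r3gt0; lra.
Qed.

Lemma cot_atan (x : R) : 0 < x -> cot (atan x) = x ^-1.
Proof.
move=> hx; have hc : 0 < cos (atan x) by rewrite cos_atan invr_gt0 sqrtr_gt0; nra.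
have ht := atanK x; rewrite /tan in ht.
have hs : sin (atan x) = x * cos (atan x).
  by move: hc ht; set y := atan x => hc ht; rewrite -ht divfK // gt_eqF.
have hx0 : x != 0 by rewrite gt_eqF.
have hc0 : cos (atan x) != 0 by rewrite gt_eqF.
by rewrite /cot hs; field; side.
Qed.

Lemma lagrange (u w : C) : dotc u w ^+ 2 + cim (u^* * w) ^+ 2 = cn2 u * cn2 w.
Proof. by case: u => u1 u2; case: w => w1 w2; rewrite /dotc /cn2 /cre /cim /=; ring. Qed.

Lemma sin_angle (V P Q : C) : 0 < cim ((P - V)^* * (Q - V)) ->
  sin (angle_at V P Q - pi / 3) = (cim ((P - V)^* * (Q - V)) - sq3 * dotc (P - V) (Q - V))
     / (2 * (cnorm (P - V) * cnorm (Q - V))).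
Proof.
rewrite /angle_at; move: (P - V) (Q - V) => u w hS.
have lag := lagrange u w.
move: hS lag; set S := cim (u^* * w); set d := dotc u w => hS lag.
have hp : 0 < cn2 u * cn2 w by rewrite -lag; nra.
have hu : 0 < cn2 u.
  rewrite lt_neqAle cn2_ge0 andbT; apply: contraTneq hp => <-; by rewrite mul0r ltxx.
have hw : 0 < cn2 w.
  rewrite lt_neqAle cn2_ge0 andbT; apply: contraTneq hp => <-; by rewrite mulr0 ltxx.
have nu2 := cnorm2 u; have nw2 := cnorm2 w.
have hnu : 0 < cnorm u by rewrite sqrtr_gt0.
have hnw : 0 < cnorm w by rewrite sqrtr_gt0.
set nu := cnorm u in nu2 hnu *; set nw := cnorm w in nw2 hnw *.
have hnu0 : nu != 0 by rewrite gt_eqF. have hnw0 : nw != 0 by rewrite gt_eqF.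
set x := d / (nu * nw).
have hx2 : 1 - x ^+ 2 = (S / (nu * nw)) ^+ 2.
  rewrite /x; apply: (mulIf (_ : (nu * nw) ^+ 2 != 0)); first by rewrite expf_neq0 // mulf_neq0.
  rewrite mulrBl mul1r !expr_div_n !divfK ?expf_neq0 ?mulf_neq0 // exprMn nu2 nw2 -lag.
  ring.
have hxb : -1 <= x <= 1.
  have : x ^+ 2 <= 1.
    have := sqr_ge0 (S / (nu * nw)); rewrite -hx2; lra.
  move=> h; apply/andP; split; nra.
rewrite sinB sin_acos // acosK; last by rewrite in_itv /=.
rewrite cos_pi3 sin_pi3 hx2 sqrtr_sqr ger0_norm; last first.
  by rewrite divr_ge0 // ?ltW // mulr_gt0.
rewrite /x; field; side.
Qed.

Lemma rCM (x y : R) : rC (x * y) = rC x * rC y.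
Proof. by apply: cplx_eq; rewrite /rC /=; ring. Qed.
Lemma rC_quarter : rC (1/4) = 1/4 :> C.
Proof. by rewrite /rC complexr0 fmorph_div rmorph1 rmorph_nat. Qed.
Lemma cn2M (x y : C) : cn2 (x * y) = cn2 x * cn2 y.
Proof. by case: x => ? ?; case: y => ? ?; rewrite /cn2 /cre /cim /=; ring. Qed.
Lemma cnormE (x : C) : cnorm x = Num.sqrt (cn2 x). Proof. by []. Qed.
Lemma cn2_gt0 (x : C) : x != 0 -> 0 < cn2 x.
Proof.
case: x => x1 x2 hx; rewrite /cn2 /cre /cim /=; apply: sum2_gt0; move: hx; apply: contraR.
by rewrite negb_or !negbK; case/andP => /eqP -> /eqP ->.
Qed.
Lemma sarea_cyc (A B C : C) : cim ((C - B)^* * (A - B)) = sarea2 A B C.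
Proof. by case: A => ? ?; case: B => ? ?; case: C => ? ?; rewrite /sarea2 /cim /=; ring. Qed.
Lemma sarea_cyc2 (A B C : C) : cim ((A - C)^* * (B - C)) = sarea2 A B C.
Proof. by case: A => ? ?; case: B => ? ?; case: C => ? ?; rewrite /sarea2 /cim /=; ring. Qed.

Lemma bary_scale (P : C) x y w A B C l : l != 0 ->
  is_bary P (x * l) (y * l) (w * l) A B C -> is_bary P x y w A B C.
Proof.
move=> hl [hs E]; have e : x * l + y * l + w * l = (x + y + w) * l by ring.
rewrite e in hs E; split.
  by apply: contraNneq hs => ->; rewrite mul0r.
have hl' : rC l != 0.
  apply/eqP => /(congr1 (@complex.Re R)) /= h; by rewrite h eqxx in hl.
apply: (mulIf hl'); rewrite -mulrA -rCM E !rCM; ring.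
Qed.

Lemma be_neq0 (g al be : C) :
  let A := g + al in let B := g + al * (1 + z) + be * z in let C := g + al * z in
  ~ (cnorm (B - C) = cnorm (C - A) /\ cnorm (C - A) = cnorm (A - B)) -> be != 0.
Proof.
move=> A B C hne; apply/eqP => hb0; apply: hne; rewrite /A /B /C hb0 !cnormE.
case: (g) => g1 g2; case: (al) => p1 p2; rewrite /cn2 /cre /cim /zeta /=; split; congr Num.sqrt; by field: r3sq.
Qed.

Section Ids.
Variables (g al be : C).
Let A := g + al.
Let B := g + al * (1 + z) + be * z.
Let C' := g + al * z.

Lemma K1 : cn2 (B - C') + cn2 (C' - A) + cn2 (A - B) - 2 * sq3 * sarea2 A B C' = 2 * cn2 be.
Proof.
rewrite /A /B /C' /cn2 /sarea2 /cre /cim /zeta.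
case: (g) => g1 g2; case: (al) => p1 p2; case: (be) => q1 q2 /=.
by field: r3sq.
Qed.

Lemma K2 : let S := sarea2 A B C' in
  cn2 (B - C') * (S - sq3 * dotc (B - A) (C' - A)) +
  cn2 (C' - A) * (S - sq3 * dotc (C' - B) (A - B)) +
  cn2 (A - B) * (S - sq3 * dotc (A - C') (B - C')) = 2 * S * cn2 be.
Proof.
rewrite /A /B /C' /cn2 /sarea2 /dotc /cre /cim /zeta.
case: (g) => g1 g2; case: (al) => p1 p2; case: (be) => q1 q2 /=.
by field: r3sq.
Qed.

Let S := sarea2 A B C'.
Let a2 := cn2 (B - C').
Let b2 := cn2 (C' - A).
Let c2 := cn2 (A - B).
Let X := a2 * (S - sq3 * dotc (B - A) (C' - A)).
Let Y := b2 * (S - sq3 * dotc (C' - B) (A - B)).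
Let W := c2 * (S - sq3 * dotc (A - C') (B - C')).

Lemma K3 : (be * g - al ^+ 2) * rC (X + Y + W) = be * (rC X * A + rC Y * B + rC W * C').
Proof.
rewrite /X /Y /W /a2 /b2 /c2 /S /A /B /C' /cn2 /sarea2 /dotc /cre /cim /zeta /rC.
case: (g) => g1 g2; case: (al) => p1 p2; case: (be) => q1 q2 /=.
by apply: cplx_eq => /=; field: r3sq.
Qed.

Let Xs := sq3 * (7 * a2 * b2 + 7 * a2 * c2 + 2 * b2 * c2 - 4 * a2 ^+ 2 - b2 ^+ 2 - c2 ^+ 2)
     - 2 * S * (8 * a2 + b2 + c2).
Let Ys := sq3 * (2 * a2 * b2 - a2 * c2 + 3 * b2 * c2 - 4 * b2 ^+ 2 + c2 ^+ 2)
     + 2 * S * (2 * a2 - 2 * b2 - c2).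
Let Zs := - (sq3 * (a2 * b2 - 2 * a2 * c2 - 3 * b2 * c2 - b2 ^+ 2 + 4 * c2 ^+ 2))
     + 2 * S * (2 * a2 - b2 - 2 * c2).

Lemma K4 : Xs + Ys + Zs = - 16 * S * cn2 be.
Proof.
rewrite /Xs /Ys /Zs /a2 /b2 /c2 /S /A /B /C' /cn2 /sarea2 /cre /cim /zeta.
case: (g) => g1 g2; case: (al) => p1 p2; case: (be) => q1 q2 /=.
by field: r3sq.
Qed.

Lemma K5 : (be * g - al ^+ 2 - be ^+ 2 * rC (1/4)) * rC (Xs + Ys + Zs)
   = be * (rC Xs * A + rC Ys * B + rC Zs * C').
Proof.
rewrite /Xs /Ys /Zs /a2 /b2 /c2 /S /A /B /C' /cn2 /sarea2 /cre /cim /zeta /rC.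
case: (g) => g1 g2; case: (al) => p1 p2; case: (be) => q1 q2 /=.
by apply: cplx_eq => /=; field: r3sq.
Qed.

Lemma K2' : 0 < S -> be != 0 -> X + Y + W != 0.
Proof.
move=> hS hbe; have := K2; rewrite -/S => ->.
by rewrite !mulf_neq0 ?pnatr_eq0 ?gt_eqF // cn2_gt0.
Qed.

Lemma K3' : 0 < S -> be != 0 -> forall G, be * G = be * g - al ^+ 2 -> is_bary G X Y W A B C'.
Proof.
move=> hS hbe G hG; split; first exact: K2'.
by apply: (mulfI hbe); rewrite mulrA hG; exact: K3.
Qed.

Lemma K4' : 0 < S -> be != 0 -> Xs + Ys + Zs != 0.
Proof.
move=> hS hbe; rewrite K4.
by rewrite !mulf_neq0 ?oppr_eq0 ?pnatr_eq0 ?gt_eqF // cn2_gt0.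
Qed.

Lemma K5' : 0 < S -> be != 0 -> forall F, be * F = be * g - al ^+ 2 - be ^+ 2 * rC (1/4) ->
  is_bary F Xs Ys Zs A B C'.
Proof.
move=> hS hbe F hF; split; first exact: K4'.
by apply: (mulfI hbe); rewrite mulrA hF; exact: K5.
Qed.
End Ids.

Lemma sin_angle' (V P Q : C) : 0 < sarea2 V P Q ->
  sin (angle_at V P Q - pi / 3) = (sarea2 V P Q - sq3 * dotc (P - V) (Q - V))
     / (2 * (cnorm (P - V) * cnorm (Q - V))).
Proof. exact: sin_angle. Qed.

Lemma sarea_cycB (A B C : C) : sarea2 B C A = sarea2 A B C.
Proof. exact: sarea_cyc. Qed.
Lemma sarea_cycC (A B C : C) : sarea2 C A B = sarea2 A B C.
Proof. exact: sarea_cyc2. Qed.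

Lemma pos_of_S (u w : C) : 0 < cim (u^* * w) -> 0 < cnorm u /\ 0 < cnorm w.
Proof.
move=> hS; have lag := lagrange u w.
have hp : 0 < cn2 u * cn2 w by rewrite -lag; nra.
split; rewrite cnormE sqrtr_gt0.
  rewrite lt_neqAle cn2_ge0 andbT; apply: contraTneq hp => <-; by rewrite mul0r ltxx.
rewrite lt_neqAle cn2_ge0 andbT; apply: contraTneq hp => <-; by rewrite mulr0 ltxx.
Qed.

Lemma cnorm4 (x : C) : cnorm x ^+ 4 = cn2 x ^+ 2.
Proof. by rewrite -cnorm2 -exprM. Qed.

Lemma cn2_0 : cn2 (0 : C) = 0.
Proof. by rewrite /cn2 /cre /cim /=; ring. Qed.

Lemma final_claims (g al be fa fb fc : C) : be != 0 ->
  fa = g - al ^+ 2 / be - be * (z ^+ 0) ^+ 2 / 4 ->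
  fb = g - al ^+ 2 / be - be * (z ^+ 2) ^+ 2 / 4 ->
  fc = g - al ^+ 2 / be - be * (z ^+ 1) ^+ 2 / 4 ->
  let A := g + al in let B := g + al * (1 + z) + be * z in let Cc := g + al * z in
  let a := cnorm (B - Cc) in let b := cnorm (Cc - A) in let c := cnorm (A - B) in
  let S := sarea2 A B Cc in
  let r3 := Num.sqrt (3 : R) in
  0 < S ->
  let s := cnorm (fa - fb) in
  (fa != fb /\ cnorm (fa - fb) = cnorm (fb - fc) /\ cnorm (fb - fc) = cnorm (fc - fa)
   /\ isX16 ((fa + fb + fc) / rC 3) A B Cc) /\
  is_bary fa
    (r3 * (7 * a ^+ 2 * b ^+ 2 + 7 * a ^+ 2 * c ^+ 2 + 2 * b ^+ 2 * c ^+ 2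
           - 4 * a ^+ 4 - b ^+ 4 - c ^+ 4)
     - 2 * S * (8 * a ^+ 2 + b ^+ 2 + c ^+ 2))
    (r3 * (2 * a ^+ 2 * b ^+ 2 - a ^+ 2 * c ^+ 2 + 3 * b ^+ 2 * c ^+ 2
           - 4 * b ^+ 4 + c ^+ 4)
     + 2 * S * (2 * a ^+ 2 - 2 * b ^+ 2 - c ^+ 2))
    (- (r3 * (a ^+ 2 * b ^+ 2 - 2 * a ^+ 2 * c ^+ 2 - 3 * b ^+ 2 * c ^+ 2
              - b ^+ 4 + 4 * c ^+ 4))
     + 2 * S * (2 * a ^+ 2 - b ^+ 2 - 2 * c ^+ 2))
    A B Cc /\
  s ^+ 2 = 3 / 32 * (a ^+ 2 + b ^+ 2 + c ^+ 2 - 2 * r3 * S) /\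
  s ^+ 2 = 3 / 16 * (cot (brocard A B Cc) - r3) * S.
Proof.
move=> hbe efa efb efc A B Cc a b c S r3 HS s.
rewrite expr0 expr1n mulr1 in efa.
rewrite -exprM /= zeta4 in efb.
rewrite expr1 zeta2 in efc.
move: efa efb efc; set G := g - al ^+ 2 / be => efa efb efc.
have hG : be * G = be * g - al ^+ 2 by rewrite /G; field; side.
clearbody G.
have hq := cn2_gt0 _ hbe.
have r14 := rC_quarter.
have n1 : cn2 (rC (1/4)) = 1/16 by rewrite /cn2 /rC /cre /cim /=; field.
have dab : fa - fb = be * (-(z + 1)) * rC (1/4) by rewrite efa efb r14; field; side.
have dbc : fb - fc = be * (2 * z - 1) * rC (1/4) by rewrite efb efc r14; field; side.
have dca : fc - fa = be * (2 - z) * rC (1/4) by rewrite efc efa r14; field; side.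
have nab : cn2 (fa - fb) = cn2 be * 3 / 16.
  rewrite dab !cn2M n1 (_ : cn2 (-(z+1)) = 3); first by field.
  by rewrite /cn2 /cre /cim /zeta /=; field: r3sq.
have nbc : cn2 (fb - fc) = cn2 be * 3 / 16.
  rewrite dbc !cn2M n1 (_ : cn2 (2 * z - 1) = 3); first by field.
  by rewrite /cn2 /cre /cim /zeta /=; field: r3sq.
have nca : cn2 (fc - fa) = cn2 be * 3 / 16.
  rewrite dca !cn2M n1 (_ : cn2 (2 - z) = 3); first by field.
  by rewrite /cn2 /cre /cim /zeta /=; field: r3sq.
have k1 : cn2 (B - Cc) + cn2 (Cc - A) + cn2 (A - B) - 2 * sq3 * sarea2 A B Cc = 2 * cn2 be
  := K1 g al be.
split; [split; [|split; [|split]] | split; [|split]].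
- apply/eqP => e; move: nab; rewrite e subrr cn2_0 => h.
  by move: hq; rewrite (_ : cn2 be = 0) ?ltxx //; lra.
- by rewrite !cnormE nab nbc.
- by rewrite !cnormE nbc nca.
- rewrite /isX16.
  have ec : (fa + fb + fc) / rC 3 = G.
    by rewrite efa efb efc /rC complexr0 rmorph_nat; field; side.
  rewrite ec.
  have hSB : 0 < sarea2 B Cc A by rewrite sarea_cycB.
  have hSC : 0 < sarea2 Cc A B by rewrite sarea_cycC.
  rewrite (sin_angle' A B Cc HS) (sin_angle' B Cc A hSB) (sin_angle' Cc A B hSC).
  rewrite (sarea_cycB A B Cc) (sarea_cycC A B Cc) (cnormB B A) (cnormB Cc B) (cnormB A Cc).
  have [hBA hCA] := pos_of_S _ _ HS.
  have [hCB hAB] := pos_of_S _ _ hSB.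
  rewrite cnormB in hBA; rewrite cnormB in hCB.
  move: hBA hCA hCB hAB.
  set na := cnorm (B - Cc); set nb := cnorm (Cc - A); set nc := cnorm (A - B) => hc hb ha _.
  have na0 : na != 0 by rewrite gt_eqF.
  have nb0 : nb != 0 by rewrite gt_eqF.
  have nc0 : nc != 0 by rewrite gt_eqF.
  apply: (@bary_scale G _ _ _ A B Cc (2 * (na * nb * nc))).
    by rewrite !mulf_neq0 ?pnatr_eq0.
  rewrite (_ : na * ((sarea2 A B Cc - sq3 * dotc (B - A) (Cc - A)) / (2 * (nc * nb)))
     * (2 * (na * nb * nc)) = na ^+ 2 * (sarea2 A B Cc - sq3 * dotc (B - A) (Cc - A)));
     last by field; side.
  rewrite (_ : nb * ((sarea2 A B Cc - sq3 * dotc (Cc - B) (A - B)) / (2 * (na * nc)))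
     * (2 * (na * nb * nc)) = nb ^+ 2 * (sarea2 A B Cc - sq3 * dotc (Cc - B) (A - B)));
     last by field; side.
  rewrite (_ : nc * ((sarea2 A B Cc - sq3 * dotc (A - Cc) (B - Cc)) / (2 * (nb * na)))
     * (2 * (na * nb * nc)) = nc ^+ 2 * (sarea2 A B Cc - sq3 * dotc (A - Cc) (B - Cc)));
     last by field; side.
  rewrite /na /nb /nc !cnorm2.
  exact: (K3' g al be HS hbe G hG).
- rewrite /a /b /c /r3 /S !cnorm4 !cnorm2.
  refine (K5' g al be HS hbe fa _).
  by rewrite efa mulrBr hG r14; field.
- by rewrite /s /a /b /c /r3 /S !cnorm2 nab k1; field.
- rewrite /s /r3 /S cnorm2 nab /brocard !cnorm2.
  have h3 := r3gt0.
  have hsum : 0 < cn2 (B - Cc) + cn2 (Cc - A) + cn2 (A - B).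
    have : 0 < sq3 * sarea2 A B Cc by rewrite mulr_gt0.
    have := cn2_ge0 be; lra.
  rewrite cot_atan; last by rewrite divr_gt0 // mulr_gt0.
  have S0 : sarea2 A B Cc != 0 by rewrite gt_eqF.
  have hs0 : cn2 (B - Cc) + cn2 (Cc - A) + cn2 (A - B) != 0 by rewrite gt_eqF.
  have -> : cn2 be = (cn2 (B - Cc) + cn2 (Cc - A) + cn2 (A - B) - 2 * sq3 * sarea2 A B Cc) / 2.
    by rewrite k1; field.
  by field; side.
Qed.
End S.

Theorem mainTheorem14 (R : realType) (phi : lat -> lat -> R[i]) (fa fb fc : R[i]) :
  hex_grid phi ->
  let A := refA phi in let B := refB phi in let C := refC phi in
  let a := cnorm (B - C) in let b := cnorm (C - A) in let c := cnorm (A - B) in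
  let S := sarea2 A B C in
  let r3 := Num.sqrt (3 : R) in
  0 < S ->
  ~ (a = b /\ b = c) ->
  (forall p, on_parabola_with_focus fa (chain_vertex phi p dirA)) ->
  (forall p, on_parabola_with_focus fb (chain_vertex phi p dirB)) ->
  (forall p, on_parabola_with_focus fc (chain_vertex phi p dirC)) ->
  let s := cnorm (fa - fb) in
  (* 1. equilateral triangle with centroid X16 *)
  (fa != fb /\ cnorm (fa - fb) = cnorm (fb - fc) /\ cnorm (fb - fc) = cnorm (fc - fa)
   /\ isX16 ((fa + fb + fc) / rC 3) A B C) /\
  (* 2. barycentric coordinates of f_a *)
  is_bary fa
    (r3 * (7 * a ^+ 2 * b ^+ 2 + 7 * a ^+ 2 * c ^+ 2 + 2 * b ^+ 2 * c ^+ 2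
           - 4 * a ^+ 4 - b ^+ 4 - c ^+ 4)
     - 2 * S * (8 * a ^+ 2 + b ^+ 2 + c ^+ 2))
    (r3 * (2 * a ^+ 2 * b ^+ 2 - a ^+ 2 * c ^+ 2 + 3 * b ^+ 2 * c ^+ 2
           - 4 * b ^+ 4 + c ^+ 4)
     + 2 * S * (2 * a ^+ 2 - 2 * b ^+ 2 - c ^+ 2))
    (- (r3 * (a ^+ 2 * b ^+ 2 - 2 * a ^+ 2 * c ^+ 2 - 3 * b ^+ 2 * c ^+ 2
              - b ^+ 4 + 4 * c ^+ 4))
     + 2 * S * (2 * a ^+ 2 - b ^+ 2 - 2 * c ^+ 2))
    A B C /\
  (* 3. side length *)
  s ^+ 2 = 3 / 32 * (a ^+ 2 + b ^+ 2 + c ^+ 2 - 2 * r3 * S) /\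
  s ^+ 2 = 3 / 16 * (cot (brocard A B C) - r3) * S.
Proof.
move=> Hg.
have [g [al [be [G00 G10]]]] := good_init R phi Hg.
have [GA0 [GA1 [GA2 [GA3 [GA4 [GB0 [GB1 [GB2 [GB3 [GB4 [GC0 [GC1 [GC2 [GC3 GC4]]]]]]]]]]]]]]
  := needed R phi g al be Hg G00 G10.
have eA : refA phi = g + al.
  have e : phi (0,0) (1,0) = model R g al be (latC R (0,0))
      (latC R (ladd (0,0) (dir (@Ordinal 6 0 isT)))) := G00 (@Ordinal 6 0 isT).
  by rewrite /refA e latC_add latC00 latC_dir /model expr0; ring.
have eC : refC phi = g + al * zeta R.
  have sym := Hg.1 (0,1) (0,0) (adj_dir R (0,1) (@Ordinal 6 4 isT)).
  have e : phi (0,0) (0,1) = model R g al be (latC R (0,0))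
      (latC R (ladd (0,0) (dir (@Ordinal 6 1 isT)))) := G00 (@Ordinal 6 1 isT).
  by rewrite /refC sym e latC_add latC00 latC_dir /model expr1; ring.
have eB : refB phi = g + al * (1 + zeta R) + be * zeta R.
  have e : phi (1,0) (0,1) = model R g al be (latC R (1,0))
      (latC R (ladd (1,0) (dir (@Ordinal 6 2 isT)))) := G10 (@Ordinal 6 2 isT).
  have l10 : latC R (1,0) = 1 by rewrite latCE /=; ring.
  by rewrite /refB e latC_add l10 latC_dir /model zeta2; ring.
rewrite eA eB eC.
move=> A B C a b c S r3 HS Hne HA HB HC s.
have hbe : be != 0 := be_neq0 R g al be Hne.
have efa := focus_of R phi g al be dirA (@Ordinal 6 0 isT) fa erefl hbe
  (fun n => match n with 0 => fun _ => GA0 | 1 => fun _ => GA1 | 2 => fun _ => GA2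
           | 3 => fun _ => GA3 | 4 => fun _ => GA4 | _ => fun h => False_ind _ (notF h) end)
  (HA (0,0)).
have efb := focus_of R phi g al be dirB (@Ordinal 6 2 isT) fb erefl hbe
  (fun n => match n with 0 => fun _ => GB0 | 1 => fun _ => GB1 | 2 => fun _ => GB2
           | 3 => fun _ => GB3 | 4 => fun _ => GB4 | _ => fun h => False_ind _ (notF h) end)
  (HB (0,0)).
have efc := focus_of R phi g al be dirC (@Ordinal 6 1 isT) fc erefl hbe
  (fun n => match n with 0 => fun _ => GC0 | 1 => fun _ => GC1 | 2 => fun _ => GC2
           | 3 => fun _ => GC3 | 4 => fun _ => GC4 | _ => fun h => False_ind _ (notF h) end)
  (HC (0,0)).
exact: (final_claims R g al be fa fb fc hbe efa efb efc HS).
Qed.
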